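(* If $U$ is a non-empty open subset of $\mathfrak E$ (respectively of $\mathfrak E_{\mathrm c}$) that is bounded in the $\ell^2$-norm, then the boundary of $U$ in $\mathfrak E$ (respectively in $\mathfrak E_{\mathrm c}$) is not $\sigma$-compact.
   Context: $\ell^2$ is the Hilbert space of square-summable real sequences with norm $\|\cdot\|$. Erdős space is $\mathfrak E=\{x\in\ell^2:x_i\in\mathbb Q\text{ for each } i<\omega\}$ and complete Erdős space is $\mathfrak E_{\mathrm c}=\{x\in\ell^2:x_i\in\{0\}\cup\{1/n:n=1,2,3,\dots\}\text{ for each } i<\omega\}$, both with the norm topology. *)

(* Defs.v *)
From Stdlib Require Import Reals QArith Qreals List.
Open Scope R_scope.

Definition seqR := nat -> R.

Definition in_l2 (x : seqR) : Prop :=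
  exists l, infinite_sum (fun i => (x i)^2) l.

Definition norm_le (x : seqR) (M : R) : Prop :=
  exists l, infinite_sum (fun i => (x i)^2) l /\ sqrt l <= M.

Definition dist_lt (x y : seqR) (r : R) : Prop :=
  exists l, infinite_sum (fun i => (x i - y i)^2) l /\ sqrt l < r.

Definition Erdos (x : seqR) : Prop :=
  in_l2 x /\ forall i : nat, exists q : Q, x i = Q2R q.

Definition ErdosC (x : seqR) : Prop :=
  in_l2 x /\ forall i : nat,
    x i = 0 \/ exists n : nat, (1 <= n)%nat /\ x i = / INR n.

Definition open_in (X U : seqR -> Prop) : Prop :=
  (forall x, U x -> X x) /\
  forall x, U x -> exists e, 0 < e /\ forall y, X y -> dist_lt x y e -> U y.

Definition boundary_in (X U : seqR -> Prop) (x : seqR) : Prop :=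
  X x /\ forall e, 0 < e ->
    (exists y, X y /\ dist_lt x y e /\ U y) /\
    (exists y, X y /\ dist_lt x y e /\ ~ U y).

Definition l2_bounded (U : seqR -> Prop) : Prop :=
  exists M, forall x, U x -> norm_le x M.

Definition compact_in (X K : seqR -> Prop) : Prop :=
  (forall x, K x -> X x) /\
  forall (I : Type) (O : I -> seqR -> Prop),
    (forall i, open_in X (O i)) ->
    (forall x, K x -> exists i, O i x) ->
    exists l : list I, forall x, K x -> exists i, In i l /\ O i x.

Definition sigma_compact_in (X S : seqR -> Prop) : Prop :=
  exists K : nat -> seqR -> Prop,
    (forall n, compact_in X (K n)) /\ forall x, S x <-> exists n, K n x.

(* Main.v *)
Require Import Defs.
From Stdlib Require Import Reals QArith Qreals List Lia Lra ZArith.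
From Stdlib Require Import ClassicalEpsilon Classical FunctionalExtensionality.
Open Scope R_scope.

Lemma sum_S (a : nat -> R) n : sum_f_R0 a (S n) = sum_f_R0 a n + a (S n).
Proof. reflexivity. Qed.

Lemma psum_nonneg (a : nat -> R) : (forall i, 0 <= a i) -> forall n, 0 <= sum_f_R0 a n.
Proof. intros Ha n; induction n; simpl; [apply Ha| specialize (Ha (S n)); lra]. Qed.

Lemma psum_mono (a : nat -> R) : (forall i, 0 <= a i) -> forall n m, (n <= m)%nat -> sum_f_R0 a n <= sum_f_R0 a m.
Proof. intros Ha n m H; induction H; [lra|]. simpl. specialize (Ha (S m)); lra. Qed.

Lemma psum_ge_term (a : nat -> R) : (forall i, 0 <= a i) -> forall n, a n <= sum_f_R0 a n.
Proof. intros Ha n; destruct n; simpl; [lra|]. pose proof (psum_nonneg a Ha n); lra. Qed.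

Lemma psum_le_lim (a : nat -> R) l : (forall i, 0 <= a i) -> infinite_sum a l -> forall n, sum_f_R0 a n <= l.
Proof.
  intros Ha Hl n. apply (growing_ineq (sum_f_R0 a)); [|exact Hl].
  intro k; simpl; specialize (Ha (S k)); lra.
Qed.

Lemma conv_of_bounded (a : nat -> R) B : (forall i, 0 <= a i) -> (forall n, sum_f_R0 a n <= B) ->
  exists l, infinite_sum a l /\ l <= B.
Proof.
  intros Ha HB.
  assert (Hg : Un_growing (sum_f_R0 a)) by (intro k; simpl; specialize (Ha (S k)); lra).
  assert (Hu : has_ub (sum_f_R0 a)).
  { exists B. intros x [n ->]. apply HB. }
  destruct (growing_cv _ Hg Hu) as [l Hl]. exists l; split; [exact Hl|].
  destruct (Rle_or_lt l B) as [h|h]; [exact h|exfalso].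
  destruct (Hl (l - B)) as [N HN]; [lra|]. specialize (HN N (le_n _)). specialize (HB N).
  unfold Rdist in HN. apply Rabs_def2 in HN. lra.
Qed.

Lemma bound_of_normle x M : norm_le x M -> forall n, sum_f_R0 (fun i => (x i)^2) n <= M^2.
Proof.
  intros [l [Hl Hs]] n.
  assert (Hn : forall i, 0 <= (x i)^2) by (intro; apply pow2_ge_0).
  pose proof (psum_le_lim _ l Hn Hl n). pose proof (psum_nonneg _ Hn 0).
  pose proof (psum_le_lim _ l Hn Hl 0).
  assert (Hl0 : 0 <= l) by lra. pose proof (sqrt_sqrt l Hl0). pose proof (sqrt_pos l).
  assert (l <= M^2) by nra. lra.
Qed.

Lemma dist_from_bound (a : nat -> R) c e : (forall i, 0 <= a i) -> (forall n, sum_f_R0 a n <= c) ->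
  c < e^2 -> 0 < e -> exists l, infinite_sum a l /\ sqrt l < e.
Proof.
  intros Ha Hc Hce He. destruct (conv_of_bounded a c Ha Hc) as [l [Hl Hlc]].
  exists l; split; auto. pose proof (psum_le_lim a l Ha Hl 0). pose proof (psum_nonneg a Ha 0).
  replace e with (sqrt (e^2)). apply sqrt_lt_1_alt; lra.
  rewrite sqrt_pow2; lra.
Qed.

Lemma dist_to_bound x y e : dist_lt x y e -> exists l, (forall n, sum_f_R0 (fun i => (x i - y i)^2) n <= l) /\ l < e^2.
Proof.
  intros [l [Hl Hs]]. exists l.
  assert (Hn : forall i, 0 <= (x i - y i)^2) by (intro; apply pow2_ge_0).
  split. apply psum_le_lim; auto.
  pose proof (psum_le_lim _ l Hn Hl 0). pose proof (psum_nonneg _ Hn 0).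
  assert (Hl0 : 0 <= l) by lra. pose proof (sqrt_sqrt l Hl0). pose proof (sqrt_pos l). nra.
Qed.

Lemma psum_stable (a : nat -> R) B : (forall i, (B < i)%nat -> a i = 0) -> forall n, (B <= n)%nat -> sum_f_R0 a n = sum_f_R0 a B.
Proof. intros Ha n H; induction H; [reflexivity|]. simpl. rewrite Ha by lia. lra. Qed.

Lemma finsupp_l2 (z : seqR) B : (forall i, (B <= i)%nat -> z i = 0) -> in_l2 z.
Proof.
  intros Hz. assert (Hn : forall i, 0 <= (z i)^2) by (intro; apply pow2_ge_0).
  destruct (conv_of_bounded (fun i => (z i)^2) (sum_f_R0 (fun i => (z i)^2) B) Hn) as [l [Hl _]].
  - intro n. destruct (Nat.le_gt_cases n B). apply psum_mono; auto.
    rewrite (psum_stable _ B); [lra| |lia]. intros i Hi; rewrite Hz by lia; simpl; lra.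
  - exists l; exact Hl.
Qed.

Lemma sum_zero (a : nat -> R) n : (forall i, (i <= n)%nat -> a i = 0) -> sum_f_R0 a n = 0.
Proof. intro H. rewrite (sum_eq a (fun _ => 0)) by auto. rewrite sum_cte; lra. Qed.

Lemma spike_sum F c n : sum_f_R0 (fun i => if Nat.eqb i F then c else 0) n = if Nat.leb F n then c else 0.
Proof.
  induction n.
  - destruct F; simpl; lra.
  - change (sum_f_R0 (fun i => if Nat.eqb i F then c else 0) (S n)) with
      (sum_f_R0 (fun i => if Nat.eqb i F then c else 0) n + (if Nat.eqb (S n) F then c else 0)).
    rewrite IHn. destruct (Nat.eqb_spec (S n) F); destruct (Nat.leb_spec F n); destruct (Nat.leb_spec F (S n)); try lia; lra.
Qed.

Lemma spike_le F c n : 0 <= c -> sum_f_R0 (fun i => if Nat.eqb i F then c else 0) n <= c.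
Proof. intro; rewrite spike_sum; destruct (Nat.leb F n); lra. Qed.

Definition tind (N : nat) (y : seqR) : seqR := fun i => if Nat.ltb i N then 0 else y i.

Lemma l2_tail (y : seqR) eps : in_l2 y -> 0 < eps -> exists N, forall n, sum_f_R0 (fun i => (tind N y i)^2) n <= eps.
Proof.
  intros [l Hl] He.
  assert (Hn : forall i, 0 <= (y i)^2) by (intro; apply pow2_ge_0).
  destruct (Hl eps He) as [N0 HN0]. exists (S N0). intro n.
  destruct (Nat.le_gt_cases N0 n) as [Hle|Hgt].
  - assert (Heq : forall m, (N0 <= m)%nat -> sum_f_R0 (fun i => (tind (S N0) y i)^2) m + sum_f_R0 (fun i => (y i)^2) N0 = sum_f_R0 (fun i => (y i)^2) m).
    { intros m Hm; induction Hm.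
      - rewrite sum_zero; [lra|]. intros i Hi; unfold tind. destruct (Nat.ltb_spec i (S N0)); [simpl; lra|lia].
      - rewrite !sum_S. unfold tind at 2. destruct (Nat.ltb_spec (S m) (S N0)); [lia|]. lra. }
    specialize (Heq n Hle). specialize (HN0 N0 (le_n _)). unfold Rdist in HN0. apply Rabs_def2 in HN0.
    pose proof (psum_le_lim _ l Hn Hl n). lra.
  - rewrite sum_zero; [lra|]. intros i Hi; unfold tind. destruct (Nat.ltb_spec i (S N0)); [simpl; lra|lia].
Qed.

Lemma ab_ineq a b t : 0 < t -> (a+b)^2 <= (1+t)*a^2 + (1+/t)*b^2.
Proof.
  intro Ht.
  assert (E : t*((1+t)*a^2 + (1+/t)*b^2 - (a+b)^2) = (t*a - b)^2) by (field; lra).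
  assert (0 <= t*((1+t)*a^2 + (1+/t)*b^2 - (a+b)^2)) by (rewrite E; apply pow2_ge_0).
  assert (0 <= ((1+t)*a^2 + (1+/t)*b^2 - (a+b)^2)).
  { apply (Rmult_le_reg_l t); lra. }
  lra.
Qed.

Lemma sum_lin (g h : nat -> R) a b n :
  sum_f_R0 (fun i => a * g i + b * h i) n = a * sum_f_R0 g n + b * sum_f_R0 h n.
Proof.
  rewrite plus_sum, !scal_sum. f_equal; apply sum_eq; intros; ring.
Qed.

Lemma tail_compact (X K : seqR -> Prop) eps : (forall y, X y -> in_l2 y) -> compact_in X K -> 0 < eps ->
  exists N, forall y, K y -> forall n, sum_f_R0 (fun i => (tind N y i)^2) n < eps.
Proof.
  intros HX [HKX HK] He.
  set (O := fun (N : nat) (y : seqR) => X y /\ exists c, c < eps /\ forall n, sum_f_R0 (fun i => (tind N y i)^2) n <= c).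
  assert (Hopen : forall N, open_in X (O N)).
  { intro N. split; [intros x [Hx _]; exact Hx|].
    intros y [Hy [c [Hc Hs]]].
    set (c0 := Rmax c 0).
    assert (Hc0 : 0 <= c0) by apply Rmax_r.
    assert (Hc0e : c0 < eps) by (unfold c0; apply Rmax_lub_lt; lra).
    set (t := (eps - c0)/(2*(c0+1))).
    assert (Ht : 0 < t) by (unfold t; apply Rdiv_lt_0_compat; lra).
    assert (Htc : (1+t)*c0 < eps).
    { unfold t. apply (Rmult_lt_reg_r (2*(c0+1))); [lra|].
      field_simplify; [|lra]. nra. }
    assert (Hit : 0 < 1 + /t) by (pose proof (Rinv_0_lt_compat t Ht); lra).
    set (d := (eps - (1+t)*c0)/(2*(1+/t))).
    assert (Hd : 0 < d) by (unfold d; apply Rdiv_lt_0_compat; lra).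
    exists (sqrt d). split; [apply sqrt_lt_R0; lra|].
    intros z Hz Hdz. split; [exact Hz|].
    destruct (dist_to_bound _ _ _ Hdz) as [l [Hl Hle]].
    rewrite pow2_sqrt in Hle by lra.
    exists ((1+t)*c0 + (1+/t)*l). split.
    - assert ((1+/t)*l < (1+/t)*d) by (apply Rmult_lt_compat_l; lra).
      assert ((1+/t)*d = (eps - (1+t)*c0)/2) by (unfold d; field; lra). lra.
    - intro n. eapply Rle_trans.
      + apply (sum_Rle _ (fun i => (1+t)*(tind N y i)^2 + (1+/t)*(y i - z i)^2)).
        intros i _. eapply Rle_trans.
        * replace (tind N z i) with (tind N y i + (tind N z i - tind N y i)) by ring.
          apply ab_ineq; exact Ht.
        * apply Rplus_le_compat_l. apply Rmult_le_compat_l; [lra|].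
          unfold tind; destruct (Nat.ltb i N); [|right; ring].
          replace ((0-0)^2) with 0 by ring. apply pow2_ge_0.
      + rewrite sum_lin. apply Rplus_le_compat.
        * apply Rmult_le_compat_l; [lra|]. specialize (Hs n). unfold c0. pose proof (Rmax_l c 0). lra.
        * apply Rmult_le_compat_l; [lra|]. apply Hl. }
  assert (Hcov : forall x, K x -> exists N, O N x).
  { intros x Hx. destruct (l2_tail x (eps/2) (HX x (HKX x Hx))) as [N HN]; [lra|].
    exists N. split; [apply HKX; exact Hx|]. exists (eps/2). split; [lra|exact HN]. }
  destruct (HK nat O Hopen Hcov) as [L HL].
  exists (list_max L). intros y Hy n.
  destruct (HL y Hy) as [i [Hi [_ [c [Hc Hs]]]]].
  assert (Hile : (i <= list_max L)%nat).
  { assert (Hf := proj1 (list_max_le L (list_max L)) (le_n _)).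
    rewrite Forall_forall in Hf. apply Hf, Hi. }
  eapply Rle_lt_trans; [|exact Hc]. eapply Rle_trans; [|apply (Hs n)].
  apply sum_Rle. intros k _. unfold tind.
  destruct (Nat.ltb_spec k (list_max L)); destruct (Nat.ltb_spec k i); try lia.
  - right; ring.
  - replace (0^2) with 0 by ring. apply pow2_ge_0.
  - right; ring.
Qed.

Definition XP (P : R -> Prop) (x : seqR) := in_l2 x /\ forall i, P (x i).
Definition upd (p : seqR) A v : seqR := fun i => if Nat.eqb i A then v else p i.
Definition Inv (P : R -> Prop) (U : seqR -> Prop) (p : seqR) (F : nat) :=
  XP P p /\ U p /\ forall i, (F <= i)%nat -> p i = 0.
Definition Rel (P : R -> Prop) (U K : seqR -> Prop) (j : nat) (p : seqR) (F : nat) (p' : seqR) (F' : nat) :=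
  (F < F')%nat /\ (forall i, (i < F)%nat -> p' i = p i) /\
  (exists A eps, (A < F')%nat /\ eps < (p' A)^2 /\
      forall y, K y -> forall n, sum_f_R0 (fun i => (tind A y i)^2) n < eps) /\
  (exists y, XP P y /\ ~ U y /\ (forall i, i <> F' -> y i = p' i) /\ y F' = / INR (j+2)).

Lemma tind_mono N A y n : (N <= A)%nat ->
  sum_f_R0 (fun i => (tind A y i)^2) n <= sum_f_R0 (fun i => (tind N y i)^2) n.
Proof.
  intro H. apply sum_Rle. intros k _. unfold tind.
  destruct (Nat.ltb_spec k A); destruct (Nat.ltb_spec k N); try lia.
  - right; ring.
  - replace (0^2) with 0 by ring. apply pow2_ge_0.
  - right; ring.
Qed.

Lemma count_sum A k c : sum_f_R0 (fun i => if Nat.ltb A i then c else 0) (A+k) = INR k * c.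
Proof.
  induction k.
  - rewrite sum_zero; [simpl; ring|]. intros i Hi. destruct (Nat.ltb_spec A i); [lia|reflexivity].
  - rewrite Nat.add_succ_r, sum_S, IHk. destruct (Nat.ltb_spec A (S (A+k))); [|lia].
    rewrite S_INR; ring.
Qed.

Lemma first_exit (Q : nat -> Prop) : Q 0%nat -> (exists k, ~ Q k) -> exists k, Q k /\ ~ Q (S k).
Proof.
  intros H0 [k Hk]. induction k; [contradiction|].
  destruct (classic (Q k)) as [h|h]; [exists k; auto|apply IHk, h].
Qed.

Lemma INR_pos_inv n : (1 <= n)%nat -> 0 < / INR n.
Proof. intro; apply Rinv_0_lt_compat, lt_0_INR; lia. Qed.

Lemma step (P : R -> Prop) (U K : seqR -> Prop) j p F :
  P 0 -> (forall n, (1 <= n)%nat -> P (/ INR n)) -> open_in (XP P) U -> l2_bounded U ->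
  compact_in (XP P) K -> Inv P U p F -> exists p' F', Inv P U p' F' /\ Rel P U K j p F p' F'.
Proof.
  intros HP0 HPn [HUX HUo] [M HM] HK [HXp [HUp Hsupp]].
  destruct (HUo p HUp) as [r [Hr Hrb]].
  destruct (INR_unbounded (/r)) as [m Hm].
  set (d0 := / INR (S m)).
  assert (Hd0 : 0 < d0) by (apply INR_pos_inv; lia).
  assert (Hd0r : d0 < r).
  { unfold d0. assert (HSm : INR m < INR (S m)) by (apply lt_INR; lia).
    pose proof (Rinv_0_lt_compat r Hr).
    replace r with (/ / r) by (field; lra). apply Rinv_lt_contravar; nra. }
  set (eps := d0^2/2).
  assert (Heps : 0 < eps) by (unfold eps; nra).
  destruct (tail_compact (XP P) K eps (fun y H => proj1 H) HK Heps) as [N HN].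
  set (A := Nat.max F N).
  assert (HFA : (F <= A)%nat) by apply Nat.le_max_l.
  assert (HNA : (N <= A)%nat) by apply Nat.le_max_r.
  assert (HpA : p A = 0) by (apply Hsupp; lia).
  set (q := upd p A d0).
  assert (Hq : XP P q).
  { split.
    - apply (finsupp_l2 q (S A)). intros i Hi. unfold q, upd.
      destruct (Nat.eqb_spec i A); [lia|]. apply Hsupp; lia.
    - intro i. unfold q, upd. destruct (Nat.eqb i A); [apply HPn; lia|apply HXp]. }
  assert (HUq : U q).
  { apply Hrb; [exact Hq|]. apply (dist_from_bound _ (d0^2)).
    - intro; apply pow2_ge_0.
    - intro n. eapply Rle_trans; [|apply (spike_le A (d0^2) n); apply pow2_ge_0].
      apply sum_Rle. intros i _. unfold q, upd.
      destruct (Nat.eqb_spec i A); [subst; rewrite HpA; right; ring|right; ring].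
    - nra.
    - exact Hr. }
  set (dl := / INR (j+2)).
  assert (Hdl : 0 < dl) by (apply INR_pos_inv; lia).
  set (z := fun (k : nat) (i : nat) => if (Nat.ltb A i && Nat.leb i (A+k))%bool then dl else q i).
  assert (Hqz : forall i, (A < i)%nat -> q i = 0).
  { intros i Hi. unfold q, upd. destruct (Nat.eqb_spec i A); [lia|]. apply Hsupp; lia. }
  assert (Hz : forall k, XP P (z k)).
  { intro k. split.
    - apply (finsupp_l2 (z k) (S (A+k))). intros i Hi. unfold z.
      destruct (Nat.leb_spec i (A+k)); [lia|]. rewrite Bool.andb_false_r. apply Hqz; lia.
    - intro i. unfold z. destruct (Nat.ltb A i && Nat.leb i (A+k))%bool; [apply HPn; lia|apply Hq]. }
  assert (Hz0 : z 0%nat = q).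
  { apply functional_extensionality. intro i. unfold z.
    destruct (Nat.ltb_spec A i); destruct (Nat.leb_spec i (A+0)); try lia; reflexivity. }
  assert (Hex : exists k, ~ U (z k)).
  { apply NNPP. intro Hall.
    assert (HallU : forall k, U (z k)) by (intro k; apply NNPP; intro h; apply Hall; exists k; exact h).
    destruct (INR_unbounded (M^2/dl^2)) as [k Hk].
    pose proof (bound_of_normle (z k) M (HM _ (HallU k)) (A+k)) as Hb.
    assert (Hlow : INR k * dl^2 <= sum_f_R0 (fun i => (z k i)^2) (A+k)).
    { rewrite <- (count_sum A k). apply sum_Rle. intros i Hi. unfold z.
      destruct (Nat.ltb_spec A i); destruct (Nat.leb_spec i (A+k)); try lia; simpl.
      - right; reflexivity.
      - apply pow2_ge_0. }
    assert (Hdl2 : 0 < dl^2) by nra.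
    assert (INR k * dl^2 > M^2).
    { apply (Rmult_lt_reg_r (/ dl^2)); [apply Rinv_0_lt_compat; exact Hdl2|].
      replace (INR k * dl^2 * / dl^2) with (INR k) by (field; lra).
      exact Hk. }
    lra. }
  assert (HU0 : U (z 0%nat)) by (rewrite Hz0; exact HUq).
  destruct (first_exit (fun k => U (z k)) HU0 Hex) as [k [Hk1 Hk2]].
  exists (z k), (S (A+k)).
  split; [|split; [|split; [|split]]].
  - split; [apply Hz|split; [exact Hk1|]].
    intros i Hi. unfold z. destruct (Nat.leb_spec i (A+k)); [lia|]. rewrite Bool.andb_false_r. apply Hqz; lia.
  - lia.
  - intros i Hi. unfold z. destruct (Nat.ltb_spec A i); [lia|]. simpl. unfold q, upd.
    destruct (Nat.eqb_spec i A); [lia|reflexivity].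
  - exists A, eps. split; [lia|split].
    + unfold z. destruct (Nat.ltb_spec A A); [lia|]. simpl. unfold q, upd. rewrite Nat.eqb_refl.
      unfold eps. nra.
    + intros y Hy n. eapply Rle_lt_trans; [apply tind_mono; exact HNA|]. apply HN, Hy.
  - exists (z (S k)). split; [apply Hz|split; [exact Hk2|split]].
    + intros i Hi. unfold z.
      destruct (Nat.ltb_spec A i); destruct (Nat.leb_spec i (A + S k)); destruct (Nat.leb_spec i (A+k)); try lia; reflexivity.
    + unfold z. destruct (Nat.ltb_spec A (S (A+k))); destruct (Nat.leb_spec (S (A+k)) (A + S k)); try lia. reflexivity.
Qed.

Lemma main_gen (P : R -> Prop) (U : seqR -> Prop) :
  P 0 -> (forall n, (1 <= n)%nat -> P (/ INR n)) -> open_in (XP P) U -> (exists x, U x) -> l2_bounded U ->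
  ~ sigma_compact_in (XP P) (boundary_in (XP P) U).
Proof.
  intros HP0 HPn HU [x0 Hx0] Hb [K [HKc HKb]].
  destruct HU as [HUX HUo].
  destruct (HUo x0 Hx0) as [r [Hr Hrb]].
  destruct (l2_tail x0 (r^2/2) (proj1 (HUX x0 Hx0))) as [N0 HN0]; [nra|].
  set (p0 := fun i => if Nat.ltb i N0 then x0 i else 0).
  assert (HI0 : Inv P U p0 N0).
  { assert (HX0 : XP P p0).
    { split.
      - apply (finsupp_l2 p0 N0). intros i Hi. unfold p0. destruct (Nat.ltb_spec i N0); [lia|reflexivity].
      - intro i. unfold p0. destruct (Nat.ltb i N0); [apply (HUX x0 Hx0)|exact HP0]. }
    split; [exact HX0|split].
    - apply Hrb; [exact HX0|]. apply (dist_from_bound _ (r^2/2)).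
      + intro; apply pow2_ge_0.
      + intro n. eapply Rle_trans; [|apply (HN0 n)]. apply sum_Rle. intros i _.
        unfold p0, tind. destruct (Nat.ltb i N0); right; ring.
      + nra.
      + exact Hr.
    - intros i Hi. unfold p0. destruct (Nat.ltb_spec i N0); [lia|reflexivity]. }
  assert (Hch : forall (j : nat) (s : seqR * nat), exists s' : seqR * nat,
     Inv P U (fst s) (snd s) -> Inv P U (fst s') (snd s') /\ Rel P U (K j) j (fst s) (snd s) (fst s') (snd s')).
  { intros j [p F]. destruct (classic (Inv P U p F)) as [h|h].
    - destruct (step P U (K j) j p F HP0 HPn (conj HUX HUo) Hb (HKc j) h) as [p' [F' H']].
      exists (p', F'). intros _. exact H'.
    - exists (p, F). intro h'. contradiction. }
  set (f := fun j s => proj1_sig (constructive_indefinite_description _ (Hch j s))).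
  assert (Hf : forall j s, Inv P U (fst s) (snd s) -> Inv P U (fst (f j s)) (snd (f j s)) /\
      Rel P U (K j) j (fst s) (snd s) (fst (f j s)) (snd (f j s))).
  { intros j s. exact (proj2_sig (constructive_indefinite_description _ (Hch j s))). }
  set (st := fun n => nat_rect (fun _ => (seqR * nat)%type) (p0, N0) (fun j s => f j s) n).
  assert (HstS : forall j, st (S j) = f j (st j)) by reflexivity.
  assert (HInv : forall j, Inv P U (fst (st j)) (snd (st j))).
  { induction j; [exact HI0|]. rewrite HstS. apply Hf, IHj. }
  assert (HRel : forall j, Rel P U (K j) j (fst (st j)) (snd (st j)) (fst (st (S j))) (snd (st (S j)))).
  { intro j. rewrite HstS. apply Hf, HInv. }
  set (Pj := fun j => fst (st j)). set (Fj := fun j => snd (st j)).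
  assert (HF : forall j, (j <= Fj j)%nat).
  { induction j; [lia|]. destruct (HRel j) as [h _]. unfold Fj in *. lia. }
  assert (HFm : forall j k, (j <= k)%nat -> (Fj j <= Fj k)%nat).
  { intros j k H; induction H; [lia|]. destruct (HRel m) as [h _]. unfold Fj in *. lia. }
  assert (Hstab : forall j k i, (j <= k)%nat -> (i < Fj j)%nat -> Pj k i = Pj j i).
  { intros j k i H; induction H; intro Hi; [reflexivity|].
    destruct (HRel m) as [_ [h _]]. unfold Pj in *. rewrite h; [apply IHle, Hi|].
    pose proof (HFm j m H). unfold Fj in *. lia. }
  set (x := fun i => Pj (S i) i).
  assert (Hx : forall j i, (i < Fj j)%nat -> x i = Pj j i).
  { intros j i Hi. unfold x. rewrite <- (Hstab (S i) (Nat.max j (S i)) i); [|lia|pose proof (HF (S i)); lia].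
    apply Hstab; [lia|exact Hi]. }
  destruct Hb as [M HM].
  assert (HxX : XP P x).
  { split.
    - destruct (conv_of_bounded (fun i => (x i)^2) (M^2)) as [l [Hl _]].
      + intro; apply pow2_ge_0.
      + intro n. rewrite (sum_eq _ (fun i => (Pj (S n) i)^2)).
        * apply bound_of_normle, HM, (HInv (S n)).
        * intros i Hi. rewrite (Hx (S n)); [reflexivity|]. pose proof (HF (S n)); lia.
      + exists l; exact Hl.
    - intro i. unfold x. apply (HInv (S i)). }
  assert (Hbd : boundary_in (XP P) U x).
  { split; [exact HxX|]. intros e He.
    destruct (l2_tail x (e^2/8) (proj1 HxX)) as [N HN]; [nra|].
    destruct (INR_unbounded (3/e)) as [j0 Hj0].
    set (j := Nat.max N j0).
    destruct (HInv j) as [HXj [HUj HSj]].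
    split.
    - exists (Pj j). split; [exact HXj|split; [|exact HUj]].
      apply (dist_from_bound _ (e^2/8)); [intro; apply pow2_ge_0| |nra|exact He].
      intro n. eapply Rle_trans; [|apply (HN n)]. apply sum_Rle. intros i _.
      destruct (Nat.ltb_spec i (Fj j)) as [h|h].
      + rewrite (Hx j i h). replace ((Pj j i - Pj j i)^2) with 0 by ring. apply pow2_ge_0.
      + unfold Pj. rewrite HSj by exact h. unfold tind.
        destruct (Nat.ltb_spec i N); [pose proof (HF j); lia|right; ring].
    - destruct (HRel j) as [HFF [_ [_ [y [HXy [HUy [Hy1 Hy2]]]]]]].
      exists y. split; [exact HXy|split; [|exact HUy]].
      set (F' := snd (st (S j))). fold F' in Hy1, Hy2, HFF.
      set (dl := / INR (j+2)) in Hy2.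
      assert (Hdl : 0 < dl) by (apply INR_pos_inv; lia).
      assert (Hdle : dl < e/3).
      { unfold dl. replace (e/3) with (/ (3/e)) by (field; lra).
        assert (0 < 3/e) by (apply Rdiv_lt_0_compat; lra).
        assert (0 < INR (j+2)) by (apply lt_0_INR; lia). apply Rinv_lt_contravar; [apply Rmult_lt_0_compat; assumption|].
        assert (INR j0 <= INR (j+2)) by (apply le_INR; lia). lra. }
      apply (dist_from_bound _ (2*(e^2/8) + 2*(dl^2))); [intro; apply pow2_ge_0| |nra|exact He].
      intro n. eapply Rle_trans.
      + apply (sum_Rle _ (fun i => 2 * (tind N x i)^2 + 2 * (if Nat.eqb i F' then dl^2 else 0))).
        intros i _.
        destruct (Nat.ltb_spec i F') as [h|h].
        * assert (i <> F') by lia. rewrite Hy1 by assumption.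
          rewrite (Hx (S j) i h). replace ((Pj (S j) i - fst (st (S j)) i)^2) with 0 by (unfold Pj; ring).
          assert (0 <= (tind N x i)^2) by apply pow2_ge_0.
          destruct (Nat.eqb i F'); [nra|lra].
        * assert (Htn : tind N x i = x i).
          { unfold tind. destruct (Nat.ltb_spec i N); [pose proof (HF j); unfold Fj in *; lia|reflexivity]. }
          rewrite Htn.
          destruct (Nat.eqb_spec i F') as [h'|h'].
          -- subst i. rewrite Hy2. pose proof (pow2_ge_0 (x F' + dl)). nra.
          -- rewrite Hy1 by exact h'. destruct (HInv (S j)) as [_ [_ HS]]. rewrite HS by (unfold F' in h; lia).
             nra.
      + rewrite sum_lin. pose proof (HN n). pose proof (spike_le F' (dl^2) n (pow2_ge_0 dl)). lra. }
  destruct (proj1 (HKb x) Hbd) as [n Hn].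
  destruct (HRel n) as [_ [_ [[A [eps [HA [Heps HKA]]]] _]]].
  specialize (HKA x Hn A).
  pose proof (psum_ge_term (fun i => (tind A x i)^2) (fun i => pow2_ge_0 _) A) as Hge.
  cbv beta in Hge.
  assert (Ht : tind A x A = x A) by (unfold tind; rewrite Nat.ltb_irrefl; reflexivity).
  rewrite Ht, (Hx (S n) A HA) in Hge. unfold Pj in Hge. lra.
Qed.

Lemma PE_inv n : (1 <= n)%nat -> exists q : Q, / INR n = Q2R q.
Proof.
  intro H. destruct n as [|n']; [lia|].
  exists (Qmake 1 (Pos.of_succ_nat n')).
  assert (E : INR (S n') = IZR (Z.pos (Pos.of_succ_nat n')))
    by (rewrite Zpos_P_of_succ_nat, <- Nat2Z.inj_succ, <- INR_IZR_INZ; reflexivity).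
  rewrite E. unfold Q2R; simpl. lra.
Qed.

Theorem corollary4p9 :
  forall X : seqR -> Prop, (X = Erdos \/ X = ErdosC) ->
  forall U : seqR -> Prop,
    open_in X U -> (exists x, U x) -> l2_bounded U ->
    ~ sigma_compact_in X (boundary_in X U).
Proof.
  intros X [HX|HX] U; subst X.
  - apply (main_gen (fun v => exists q : Q, v = Q2R q) U).
    + exists 0%Q. unfold Q2R; simpl; lra.
    + exact PE_inv.
  - apply (main_gen (fun v => v = 0 \/ exists n : nat, (1 <= n)%nat /\ v = / INR n) U).
    + left; reflexivity.
    + intros n Hn. right. exists n. auto.
Qed.
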